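(* Let $F\in SL(d,\mathbb{Z})$ be partially hyperbolic with invariant splitting $\mathbb{R}^d=S\oplus C\oplus U$. Then $F$ is Katznelson irreducible (i.e. $C\cap\mathbb{Z}^d=\{0\}$) if and only if there is no non-constant factor $\eta(x)\in\mathbb{Q}[x]$ of the characteristic polynomial of $F$ all of whose roots are eigenvalues of $F|_C$.
   Context: Partial hyperbolicity of $F$ with respect to the $F$-invariant linear splitting $S\oplus C\oplus U$: for some metric, $\|F|_S\|<1$, $m(F|_U)>1$, $\|F|_S\|<m(F|_C)$, $m(F|_U)>\|F|_C\|$, where $m$ denotes the conorm. *)

(* Defs.v *)
From HB Require Import structures.
From mathcomp Require Import all_boot all_order all_algebra.
From mathcomp Require Import classical_sets reals constructive_ereal ereal.
From mathcomp.real_closed Require Import complex.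

Set Implicit Arguments.
Unset Strict Implicit.
Unset Printing Implicit Defensive.

Import Order.TTheory GRing.Theory Num.Theory.
Local Open Scope ring_scope.
Local Open Scope classical_set_scope.

(* Vectors of R^d are row vectors 'rV[R]_d; a linear subspace of R^d is
   represented by the row space of a matrix V : 'M[R]_d (mxalgebra).
   A matrix A : 'M_d acts as the linear map v |-> A v on column vectors,
   i.e. on row vectors as v |-> v *m A^T. *)

Section Defs.
Variable R : realType.
Variable d : nat.

Definition int_to_real_mx m n (M : 'M[int]_(m, n)) : 'M[R]_(m, n) :=
  map_mx (fun z : int => z%:~R) M.

Definition lin_apply (A : 'M[R]_d) (v : 'rV[R]_d) : 'rV[R]_d := v *m A^T.

Definition mx_invariant (A : 'M[R]_d) (V : 'M[R]_d) : bool := stablemx V A^T.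

Definition invariant_splitting (A S C U : 'M[R]_d) : Prop :=
  [/\ mx_invariant A S, mx_invariant A C, mx_invariant A U,
      (S + C + U == 1%:M)%MS & mxdirect (S + C + U)].

(* a metric on R^d: an inner product <u,v> = u Q v^T, Q symmetric positive definite *)
Definition inner_product_mx (Q : 'M[R]_d) : Prop :=
  Q^T = Q /\ forall v : 'rV[R]_d, v != 0 -> 0 < (v *m Q *m v^T) 0 0.

Definition qnorm (Q : 'M[R]_d) (v : 'rV[R]_d) : R :=
  Num.sqrt ((v *m Q *m v^T) 0 0).

Definition unit_sphere (Q V : 'M[R]_d) : set 'rV[R]_d :=
  [set v | (v <= V)%MS /\ qnorm Q v = 1].

(* operator norm ||A|_V|| = sup_{v in V, |v| = 1} |A v|  (= -oo if V = 0) *)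
Definition restr_norm (Q A V : 'M[R]_d) : \bar R :=
  ereal_sup [set (qnorm Q (lin_apply A v))%:E | v in unit_sphere Q V].

(* conorm m(A|_V) = inf_{v in V, |v| = 1} |A v|  (= +oo if V = 0) *)
Definition restr_conorm (Q A V : 'M[R]_d) : \bar R :=
  ereal_inf [set (qnorm Q (lin_apply A v))%:E | v in unit_sphere Q V].

Definition partially_hyperbolic (A S C U : 'M[R]_d) : Prop :=
  invariant_splitting A S C U /\
  exists Q : 'M[R]_d, inner_product_mx Q /\
    [/\ (restr_norm Q A S < 1%:E)%E,
        (1%:E < restr_conorm Q A U)%E,
        (restr_norm Q A S < restr_conorm Q A C)%E &
        (restr_norm Q A C < restr_conorm Q A U)%E].

Definition katznelson_irreducible (C : 'M[R]_d) : Prop :=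
  forall z : 'rV[int]_d, (int_to_real_mx z <= C)%MS -> z = 0.

(* lambda in C is an eigenvalue of A|_V (restriction to V, complexified) *)
Definition restr_eigenvalue (A V : 'M[R]_d) (lambda : complex R) : Prop :=
  exists w : 'rV[complex R]_d,
    [/\ w != 0,
        (w <= map_mx (real_complex R) V)%MS &
        w *m (map_mx (real_complex R) A)^T = lambda *: w].

End Defs.

Definition char_poly_Q d (F : 'M[int]_d) : {poly rat} :=
  char_poly (map_mx (fun z : int => z%:~R) F : 'M[rat]_d).

(* Main.v *)
Require Import Defs.
From HB Require Import structures.
From mathcomp Require Import all_boot all_order all_algebra.
From mathcomp Require Import classical_sets reals constructive_ereal ereal.
From mathcomp.real_closed Require Import complex.
From Stdlib Require Import Classical.
From mathcomp Require Import ring lra.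
Import Order.TTheory GRing.Theory Num.Theory.
Local Open Scope ring_scope.
Set Implicit Arguments.
Unset Strict Implicit.
Unset Printing Implicit Defensive.
Lemma horner_trmx (K : comNzRingType) n (A : 'M[K]_n.+1) p :
  (horner_mx A p)^T = horner_mx A^T p.
Proof.
elim/poly_ind: p => [|p c IH]; first by rewrite !rmorph0 trmx0.
rewrite !rmorphD !rmorphM /= !horner_mx_X !horner_mx_C linearD /= trmx_mul IH tr_scalar_mx.
congr (_ + _); apply/esym/comm_horner_mx; exact: comm_mx_refl.
Qed.

Lemma eig_horner (K : fieldType) n (B : 'M[K]_n.+1) (w : 'rV[K]_n.+1) l p :
  w *m B = l *: w -> w *m horner_mx B p = p.[l] *: w.
Proof.
move=> Hw; elim/poly_ind: p => [|p c IH]; first by rewrite !rmorph0 mulmx0 horner0 scale0r.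
rewrite !rmorphD !rmorphM /= horner_mx_X horner_mx_C mulmxDr mulmxA IH.
by rewrite -scalemxAl Hw mul_mx_scalar scalerA hornerD hornerMX hornerC scalerDl.
Qed.

Lemma eig_exists (K : closedFieldType) n (B V : 'M[K]_n.+1) (s : 'rV[K]_n.+1) p :
  stablemx V B -> s != 0 -> (s <= V)%MS -> p != 0 -> s *m horner_mx B p = 0 ->
  exists l (w : 'rV[K]_n.+1), [/\ root p l, w != 0, (w <= V)%MS & w *m B = l *: w].
Proof.
move=> HV Hs HsV; move Hk: (size p) => k; elim: k p Hk => [|k IH] p Hk Hp0 Hsp.
  by move: Hp0; rewrite -size_poly_eq0 Hk.
have [Hp1|Hp1] := leqP (size p) 1.
  move/size1_polyC: Hp1 => Hpc; move: Hsp Hp0; rewrite Hpc horner_mx_C mul_mx_scalar.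
  by move/eqP; rewrite scaler_eq0 polyC_eq0 (negPf Hs) orbF => /eqP ->; rewrite eqxx.
have [l Hl] := closed_rootP p (negbT (gtn_eqF Hp1)).
have Hdv := Hl; rewrite -dvdp_XsubCl in Hdv.
set q := p %/ ('X - l%:P).
have Hpq : p = q * ('X - l%:P) by rewrite divpK.
have Hq0 : q != 0 by apply: contra Hp0 => /eqP Hq; rewrite Hpq Hq mul0r.
have Hsq : size q = k.
  move: Hk; rewrite Hpq size_mul ?polyXsubC_eq0 // size_XsubC addn2 /=; by case.
have [Hw|Hw] := eqVneq (s *m horner_mx B q) 0.
  have [l' [w [H1 H2 H3 H4]]] := IH q Hsq Hq0 Hw.
  exists l', w; split => //; by rewrite Hpq rootM H1.
exists l, (s *m horner_mx B q); split => //.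
  by apply: submx_trans (submxMr _ HsV) (horner_mx_stable _ HV).
move: Hsp; rewrite Hpq rmorphM /= rmorphB /= horner_mx_X horner_mx_C mulmxA mulmxBr.
by rewrite mul_mx_scalar => /eqP; rewrite subr_eq0 => /eqP.
Qed.
Local Notation iC R := (real_complex R).

Section Cplx.
Variable R : realType.

Lemma Re_sum k (f : 'I_k -> R[i]) : complex.Re (\sum_j f j) = \sum_j complex.Re (f j).
Proof. by elim/big_rec2: _ => // j x y _ <-; case: (f j) => a b; case: y. Qed.
Lemma Im_sum k (f : 'I_k -> R[i]) : complex.Im (\sum_j f j) = \sum_j complex.Im (f j).
Proof. by elim/big_rec2: _ => // j x y _ <-; case: (f j) => a b; case: y. Qed.

Lemma re_mulmx m k p (w : 'M[R[i]]_(m,k)) (B : 'M[R]_(k,p)) :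
  map_mx (@complex.Re R) (w *m map_mx (iC R) B) = map_mx (@complex.Re R) w *m B.
Proof.
apply/matrixP => i j; rewrite !mxE Re_sum; apply: eq_bigr => l _.
by rewrite !mxE; case: (w i l) => a b /=; rewrite mulr0 subr0.
Qed.
Lemma im_mulmx m k p (w : 'M[R[i]]_(m,k)) (B : 'M[R]_(k,p)) :
  map_mx (@complex.Im R) (w *m map_mx (iC R) B) = map_mx (@complex.Im R) w *m B.
Proof.
apply/matrixP => i j; rewrite !mxE Im_sum; apply: eq_bigr => l _.
by rewrite !mxE; case: (w i l) => a b /=; rewrite mulr0 add0r.
Qed.
Lemma re_scale m k (l : R[i]) (w : 'M[R[i]]_(m,k)) :
  map_mx (@complex.Re R) (l *: w) = complex.Re l *: map_mx (@complex.Re R) w - complex.Im l *: map_mx (@complex.Im R) w.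
Proof. by apply/matrixP => i j; rewrite !mxE; case: l; case: (w i j). Qed.
Lemma im_scale m k (l : R[i]) (w : 'M[R[i]]_(m,k)) :
  map_mx (@complex.Im R) (l *: w) = complex.Im l *: map_mx (@complex.Re R) w + complex.Re l *: map_mx (@complex.Im R) w.
Proof.
apply/matrixP => i j; rewrite !mxE; case: l; case: (w i j) => a b c e /=.
by rewrite addrC.
Qed.
Lemma reim_eq0 m k (w : 'M[R[i]]_(m,k)) :
  map_mx (@complex.Re R) w = 0 -> map_mx (@complex.Im R) w = 0 -> w = 0.
Proof.
move=> /matrixP H1 /matrixP H2; apply/matrixP => i j.
move: (H1 i j) (H2 i j); rewrite !mxE; case: (w i j) => a b /= -> -> //.
Qed.
Lemma re_submx k d (w : 'M[R[i]]_(k,d)) m (V : 'M[R]_(m,d)) :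
  (w <= map_mx (iC R) V)%MS -> (map_mx (@complex.Re R) w <= V)%MS /\ (map_mx (@complex.Im R) w <= V)%MS.
Proof.
by move/submxP => [D ->]; rewrite re_mulmx im_mulmx !submxMl.
Qed.

Definition qf d (Q : 'M[R]_d) (x y : 'rV[R]_d) := (x *m Q *m y^T) 0 0.

Lemma qf_sym d (Q : 'M[R]_d) x y : Q^T = Q -> qf Q x y = qf Q y x.
Proof.
move=> HQ; rewrite /qf -[in LHS](trmxK (x *m Q *m y^T)) mxE !trmx_mul trmxK HQ mulmxA //.
Qed.
Lemma qf_lin d (Q : 'M[R]_d) a b x y z :
  qf Q (a *: x + b *: y) z = a * qf Q x z + b * qf Q y z.
Proof. by rewrite /qf !mulmxDl -!scalemxAl !mxE. Qed.
Lemma qf_linr d (Q : 'M[R]_d) a b x y z :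
  qf Q z (a *: x + b *: y) = a * qf Q z x + b * qf Q z y.
Proof. by rewrite /qf linearD !linearZ /= mulmxDr -!scalemxAr !mxE. Qed.
Lemma qf0 d (Q : 'M[R]_d) z : qf Q 0 z = 0.
Proof. by rewrite /qf !mul0mx mxE. Qed.

Lemma qf_scale d (Q : 'M[R]_d) k x : qf Q (k *: x) (k *: x) = k * k * qf Q x x.
Proof. by rewrite /qf linearZ /= -!scalemxAl -scalemxAr !mxE mulrA. Qed.

Lemma qf_nn d (Q : 'M[R]_d) v : inner_product_mx Q -> 0 <= qf Q v v.
Proof.
move=> [_ HQ]; have [->|/HQ /ltW //] := eqVneq v 0; by rewrite qf0.
Qed.

Lemma spec_bounds d (Q V B : 'M[R]_d) (w : 'rV[R[i]]_d) l :
  inner_product_mx Q -> w != 0 -> (w <= map_mx (iC R) V)%MS ->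
  w *m map_mx (iC R) B = l *: w ->
  (exists v, [/\ v != 0, (v <= V)%MS &
     (complex.Re l ^+ 2 + complex.Im l ^+ 2) * qf Q v v <= qf Q (v *m B) (v *m B)])
  /\ (exists v, [/\ v != 0, (v <= V)%MS &
     qf Q (v *m B) (v *m B) <= (complex.Re l ^+ 2 + complex.Im l ^+ 2) * qf Q v v]).
Proof.
move=> HQ Hw HwV Heig.
set a := map_mx (@complex.Re R) w; set b := map_mx (@complex.Im R) w.
have [HaV HbV] := re_submx HwV.
have HaB : a *m B = complex.Re l *: a + (- complex.Im l) *: b.
  by rewrite /a -re_mulmx Heig re_scale scaleNr.
have HbB : b *m B = complex.Im l *: a + complex.Re l *: b.
  by rewrite /b -im_mulmx Heig im_scale.
set r2 := complex.Re l ^+ 2 + complex.Im l ^+ 2.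
have key : qf Q (a *m B) (a *m B) + qf Q (b *m B) (b *m B) =
    r2 * qf Q a a + r2 * qf Q b b.
  rewrite HaB HbB !qf_lin !qf_linr /r2; ring.
have Hab : a != 0 \/ b != 0.
  case: (eqVneq a 0) => Ha; last by left.
  case: (eqVneq b 0) => Hb; last by right.
  by move: Hw; rewrite (reim_eq0 Ha Hb) eqxx.
have Hz : forall x : 'rV[R]_d, x = 0 -> qf Q x x = 0 /\ qf Q (x *m B) (x *m B) = 0.
  by move=> x ->; rewrite mul0mx qf0.
have Hr2 : 0 <= r2 by rewrite /r2 addr_ge0 // sqr_ge0.
have nna := qf_nn a HQ; have nnb := qf_nn b HQ.
split.
- case: (eqVneq a 0) => Ha.
    have [H1 H2] := Hz a Ha.
    have Hb : b != 0 by case: Hab => //; rewrite Ha eqxx.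
    exists b; split => //; rewrite H1 H2 mulr0 in key; lra.
  have [h|h] := lerP (r2 * qf Q a a) (qf Q (a *m B) (a *m B)).
    by exists a.
  case: (eqVneq b 0) => Hb.
    have [H1 H2] := Hz b Hb; rewrite H1 H2 mulr0 in key; exfalso; clear -key h; lra.
  exists b; split => //; lra.
- case: (eqVneq a 0) => Ha.
    have [H1 H2] := Hz a Ha.
    have Hb : b != 0 by case: Hab => //; rewrite Ha eqxx.
    exists b; split => //; rewrite H1 H2 mulr0 in key; lra.
  have [h|h] := lerP (qf Q (a *m B) (a *m B)) (r2 * qf Q a a).
    by exists a.
  case: (eqVneq b 0) => Hb.
    have [H1 H2] := Hz b Hb; rewrite H1 H2 mulr0 in key; exfalso; clear -key h; lra.
  exists b; split => //; lra.
Qed.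

End Cplx.
Local Open Scope classical_set_scope.

Section Norms.
Variable R : realType.

Lemma unit_vec d (Q V : 'M[R]_d) (v : 'rV[R]_d) :
  inner_product_mx Q -> v != 0 -> (v <= V)%MS ->
  let k := (Num.sqrt (qf Q v v))^-1 in
  unit_sphere Q V (k *: v) /\ k * k * qf Q v v = 1 /\ 0 < k.
Proof.
move=> HQ Hv HvV k.
have Hp : 0 < qf Q v v by case: HQ => _ /(_ v Hv).
have Hs : 0 < Num.sqrt (qf Q v v) by rewrite sqrtr_gt0.
have Hk : k * k * qf Q v v = 1.
  by rewrite /k -expr2 exprVn sqr_sqrtr ?ltW // mulVf // gt_eqF.
split; last by split => //; rewrite /k invr_gt0.
split; first by rewrite scalemx_sub.
by rewrite /qnorm -[(_ *m _ *m _) 0 0]/(qf Q _ _) qf_scale Hk sqrtr1.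
Qed.

Lemma norm_lb d (Q V A : 'M[R]_d) (v : 'rV[R]_d) t :
  inner_product_mx Q -> v != 0 -> (v <= V)%MS -> 0 <= t ->
  t ^+ 2 * qf Q v v <= qf Q (v *m A^T) (v *m A^T) ->
  (t%:E <= restr_norm Q A V)%E.
Proof.
move=> HQ Hv HvV Ht Hle.
have [Hu [Hk Hk0]] := unit_vec HQ Hv HvV.
set k := (Num.sqrt (qf Q v v))^-1 in Hu Hk Hk0.
apply: le_trans (ereal_sup_ubound _); last first.
  by exists (k *: v) => //.
rewrite lee_fin /qnorm /lin_apply -scalemxAl -[(_ *m _ *m _) 0 0]/(qf Q _ _) qf_scale.
rewrite -(ger0_norm Ht) -sqrtr_sqr ler_wsqrtr //.
rewrite -[t ^+ 2]mulr1 -Hk. have Hkk : 0 < k * k by rewrite mulr_gt0. clear -Hkk Hle; nra.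
Qed.

Lemma conorm_ub d (Q V A : 'M[R]_d) (v : 'rV[R]_d) t :
  inner_product_mx Q -> v != 0 -> (v <= V)%MS -> 0 <= t ->
  qf Q (v *m A^T) (v *m A^T) <= t ^+ 2 * qf Q v v ->
  (restr_conorm Q A V <= t%:E)%E.
Proof.
move=> HQ Hv HvV Ht Hle.
have [Hu [Hk Hk0]] := unit_vec HQ Hv HvV.
set k := (Num.sqrt (qf Q v v))^-1 in Hu Hk Hk0.
apply: le_trans (ereal_inf_lbound _) _; first by exists (k *: v) => //.
rewrite lee_fin /qnorm /lin_apply -scalemxAl -[(_ *m _ *m _) 0 0]/(qf Q _ _) qf_scale.
rewrite -(ger0_norm Ht) -sqrtr_sqr ler_wsqrtr //.
rewrite -[t ^+ 2]mulr1 -Hk. have Hkk : 0 < k * k by rewrite mulr_gt0. clear -Hkk Hle; nra.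
Qed.
End Norms.

Section Sep.
Variable R : realType.
Lemma spec_sep d (Q V1 V2 A : 'M[R]_d) (w1 w2 : 'rV[R[i]]_d) l :
  inner_product_mx Q ->
  w1 != 0 -> (w1 <= map_mx (real_complex R) V1)%MS -> w1 *m map_mx (real_complex R) A^T = l *: w1 ->
  w2 != 0 -> (w2 <= map_mx (real_complex R) V2)%MS -> w2 *m map_mx (real_complex R) A^T = l *: w2 ->
  ~ (restr_norm Q A V1 < restr_conorm Q A V2)%E.
Proof.
move=> HQ H1 H1V H1e H2 H2V H2e Hlt.
have [[v1 [Hv1 Hv1V Hv1e]] _] := spec_bounds HQ H1 H1V H1e.
have [_ [v2 [Hv2 Hv2V Hv2e]]] := spec_bounds HQ H2 H2V H2e.
set r2 := (complex.Re l ^+ 2 + complex.Im l ^+ 2) in Hv1e Hv2e.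
have Hr2 : 0 <= r2 by rewrite /r2 addr_ge0 // sqr_ge0.
have Hr : Num.sqrt r2 ^+ 2 = r2 by rewrite sqr_sqrtr.
have := norm_lb (A:=A) HQ Hv1 Hv1V (sqrtr_ge0 r2); rewrite Hr => /(_ Hv1e) Ha.
have := conorm_ub (A:=A) HQ Hv2 Hv2V (sqrtr_ge0 r2); rewrite Hr => /(_ Hv2e) Hb.
have := lt_le_trans (lt_le_trans Hlt Hb) Ha.
by rewrite ltxx.
Qed.
End Sep.

Lemma in_C_of_ker (K : fieldType) d (S C U P : 'M[K]_d) (x : 'rV[K]_d) :
  (S + C + U == 1%:M)%MS -> mxdirect (S + C + U) ->
  stablemx S P -> stablemx C P -> stablemx U P -> x *m P = 0 ->
  (forall s : 'rV[K]_d, (s <= S)%MS -> s *m P = 0 -> s = 0) ->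
  (forall u : 'rV[K]_d, (u <= U)%MS -> u *m P = 0 -> u = 0) -> (x <= C)%MS.
Proof.
move=> Hfull Hdir HS HC HU HxP HS0 HU0.
have Hx : (x <= S + C + U)%MS.
  by case/andP: Hfull => _ H; apply: submx_trans H; rewrite submx1.
move: Hdir; rewrite !mxdirect_addsE => /and3P [/and3P [_ _ HSC] _ HSCU].
have HSCU' : ((S + C) :&: U)%MS = 0 := eqP HSCU.
have HSC' : (S :&: C)%MS = 0 := eqP HSC.
case/sub_addsmxP: Hx => [[y1 y2]] /= Hx.
have : (y1 *m (S + C)%MS <= S + C)%MS by rewrite submxMl.
case/sub_addsmxP => [[z1 z2]] /= Hy.
set s := z1 *m S in Hy; set c := z2 *m C in Hy; set u := y2 *m U in Hx.
have Hs : (s <= S)%MS by rewrite submxMl.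
have Hc : (c <= C)%MS by rewrite submxMl.
have Hu : (u <= U)%MS by rewrite submxMl.
have HsP : (s *m P <= S)%MS by apply: submx_trans (submxMr _ Hs) HS.
have HcP : (c *m P <= C)%MS by apply: submx_trans (submxMr _ Hc) HC.
have HuP : (u *m P <= U)%MS by apply: submx_trans (submxMr _ Hu) HU.
have Hsum : s *m P + c *m P + u *m P = 0 by rewrite -!mulmxDl -Hy -Hx.
have HuP0 : u *m P = 0.
  apply/eqP; rewrite -submx0 -HSCU' sub_capmx HuP andbT.
  have -> : u *m P = - (s *m P + c *m P) by apply/eqP; rewrite -addr_eq0 addrC Hsum.
  by rewrite eqmx_opp addmx_sub_adds.
have HsP0 : s *m P = 0.
  apply/eqP; rewrite -submx0 -HSC' sub_capmx HsP /=.
  have -> : s *m P = - (c *m P) by apply/eqP; rewrite -addr_eq0; rewrite HuP0 addr0 in Hsum; rewrite Hsum.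
  by rewrite eqmx_opp.
have -> : x = c by rewrite Hx Hy (HS0 s Hs HsP0) (HU0 u Hu HuP0) add0r addr0.
by [].
Qed.

Definition krylov (K : fieldType) n k (z : 'rV[K]_n.+1) (B : 'M[K]_n.+1) : 'M[K]_(k, n.+1) :=
  \matrix_(i < k) (z *m B ^+ i).

Lemma krylov_poly (K : fieldType) n k (z : 'rV[K]_n.+1) (B : 'M[K]_n.+1) (c : 'rV[K]_k) :
  z *m horner_mx B (rVpoly c) = c *m krylov k z B.
Proof.
rewrite [rVpoly c]poly_def linear_sum mulmx_sumr mulmx_sum_row; apply: eq_bigr => i _.
by rewrite valK linearZ /= rmorphXn /= horner_mx_X rowK scalemxAr.
Qed.

Lemma map_krylov (K L : fieldType) (f : {rmorphism K -> L}) n k (z : 'rV[K]_n.+1) (B : 'M[K]_n.+1) :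
  map_mx f (krylov k z B) = krylov k (map_mx f z) (map_mx f B).
Proof.
by apply/row_matrixP => i; rewrite -map_row !rowK map_mxM rmorphXn.
Qed.

Lemma min_annih (K : fieldType) n (z : 'rV[K]_n.+1) (B : 'M[K]_n.+1) p :
  p != 0 -> z *m horner_mx B p = 0 ->
  exists p, [/\ p != 0, z *m horner_mx B p = 0 &
    forall q, q != 0 -> z *m horner_mx B q = 0 -> (size p <= size q)%N].
Proof.
move Hk: (size p) => k; elim/ltn_ind: k p Hk => k IH p Hk Hp Ha.
case: (classic (exists q, [/\ q != 0, z *m horner_mx B q = 0 & (size q < size p)%N])).
  by move=> [q [Hq Hqa Hlt]]; apply: (IH (size q)) => //; rewrite -Hk.
move=> Hno; exists p; split => // q Hq Hqa; rewrite leqNgt; apply/negP => Hlt.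
by apply: Hno; exists q.
Qed.

Lemma dir2 (K : fieldType) (L : closedFieldType) (f : {rmorphism K -> L}) n
    (z : 'rV[K]_n.+1) (B : 'M[K]_n.+1) (V : 'M[L]_n.+1) p l :
  p != 0 -> z *m horner_mx B p = 0 ->
  (forall q, q != 0 -> z *m horner_mx B q = 0 -> (size p <= size q)%N) ->
  stablemx V (map_mx f B) -> (map_mx f z <= V)%MS -> root (map_poly f p) l ->
  exists w : 'rV[L]_n.+1, [/\ w != 0, (w <= V)%MS & w *m map_mx f B = l *: w].
Proof.
move=> Hp Ha Hmin HV HzV Hr.
set pc := map_poly f p.
have Hpc : pc != 0 by rewrite map_poly_eq0.
have Hdv := Hr; rewrite -dvdp_XsubCl in Hdv.
set g := pc %/ ('X - l%:P).
have Hpg : pc = g * ('X - l%:P) by rewrite divpK.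
have Hg0 : g != 0 by apply: contra Hpc => /eqP Hq; rewrite Hpg Hq mul0r.
set k := (size p).-1.
have Hsg : size g = k.
  rewrite /k -(size_map_poly f p) -/pc Hpg size_mul ?polyXsubC_eq0 // size_XsubC addn2 //.
have Hfree : row_free (krylov k z B).
  apply/negPn/negP; rewrite -kermx_eq0 => /rowV0Pn [v /sub_kermxP Hv Hv0].
  have Hh0 : rVpoly v != 0.
    by apply: contra Hv0 => /eqP H0; rewrite -[v]rVpolyK H0 linear0.
  have := Hmin _ Hh0; rewrite krylov_poly Hv => /(_ erefl).
  have := size_poly k (fun i => if insub i is Some j then v 0 j else 0); move=> H1 H2.
  have : (size p <= k)%N by apply: leq_trans H2 H1.
  move=> Hle; have Hlt : (k < size p)%N by rewrite /k ltn_predL size_poly_gt0.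
  by have := leq_ltn_trans Hle Hlt; rewrite ltnn.
set w := map_mx f z *m horner_mx (map_mx f B) g.
exists w; split.
- apply/negP => /eqP Hw.
  set c : 'rV[L]_k := poly_rV g.
  have Hgc : g = rVpoly c by rewrite poly_rV_K // Hsg.
  have : c *m map_mx f (krylov k z B) = 0 *m map_mx f (krylov k z B).
    by rewrite mul0mx map_krylov -krylov_poly -Hgc.
  have Hfree' : row_free (map_mx f (krylov k z B)) by rewrite /row_free mxrank_map.
  move/(row_free_inj Hfree') => Hc0.
  by move: Hg0; rewrite Hgc Hc0 linear0 eqxx.
- by apply: submx_trans (submxMr _ HzV) (horner_mx_stable _ HV).
- have : map_mx f z *m horner_mx (map_mx f B) pc = 0.
    by rewrite /pc -map_horner_mx -map_mxM Ha map_mx0.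
  rewrite Hpg rmorphM /= rmorphB /= horner_mx_X horner_mx_C mulmxA mulmxBr.
  by rewrite mul_mx_scalar => /eqP; rewrite subr_eq0 => /eqP.
Qed.
Lemma clear_den n (v : 'rV[rat]_n) :
  exists z : 'rV[int]_n, exists k : rat, k != 0 /\ map_mx (fun x : int => x%:~R) z = k *: v.
Proof.
exists (\row_j ((\prod_(i | i != j) denq (v 0 i)) * numq (v 0 j))).
exists (\prod_i ((denq (v 0 i))%:~R : rat)); split.
  by apply/prodf_neq0 => i _; rewrite intr_eq0 denq_neq0.
apply/rowP => j; rewrite !mxE intrM rmorph_prod /= numqE [in RHS](bigD1 j) //=.
ring.
Qed.

Unset Implicit Arguments.

Theorem lemma3p1 (R : realType) (d : nat) (F : 'M[int]_d) (S C U : 'M[R]_d) :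
  \det F = 1 ->
  partially_hyperbolic (int_to_real_mx R F) S C U ->
  (katznelson_irreducible C <->
   ~ (exists eta : {poly rat},
        [/\ (1 < size eta)%N,
            eta %| char_poly_Q F &
            forall lambda : complex R,
              root (map_poly (fun q : rat => ratr q) eta) lambda ->
              restr_eigenvalue (int_to_real_mx R F) C lambda])).
Proof.
case: d F S C U => [|n] F S C U _.
  move=> _; split.
    move=> _ [eta [Hs _ Hr]].
    have Hs' : size (map_poly (fun q : rat => (ratr q : R[i])) eta) != 1%N.
      by rewrite size_map_poly gtn_eqF.
    have [l Hl] := closed_rootP _ Hs'.
    have [w [Hw _ _]] := Hr l Hl.
    by move: Hw; rewrite thinmx0 eqxx.
  by move=> _ z _; rewrite thinmx0.
move=> [[HSi HCi HUi Hfull Hdir] [Q [HQ [H1 H2 H3 H4]]]].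
set AR := int_to_real_mx R F.
set Fq : 'M[rat]_n.+1 := map_mx (fun x : int => x%:~R) F.
set Bq := Fq^T.
have cR : map_mx (ratr : rat -> R) Bq = AR^T.
  by apply/matrixP => i j; rewrite !mxE ratr_int.
have cC : map_mx (ratr : rat -> R[i]) Bq = map_mx (real_complex R) AR^T.
  by apply/matrixP => i j; rewrite !mxE ratr_int rmorph_int.
have vR (z : 'rV[int]_n.+1) :
    map_mx (ratr : rat -> R) (map_mx (fun x : int => x%:~R) z) = int_to_real_mx R z.
  by apply/matrixP => i j; rewrite !mxE ratr_int.
have vC (z : 'rV[int]_n.+1) :
    map_mx (ratr : rat -> R[i]) (map_mx (fun x : int => x%:~R) z) =
    map_mx (real_complex R) (int_to_real_mx R z).
  by apply/matrixP => i j; rewrite !mxE ratr_int rmorph_int.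
have stabC (V : 'M[R]_n.+1) : mx_invariant AR V ->
    stablemx (map_mx (real_complex R) V) (map_mx (real_complex R) AR^T).
  by rewrite /mx_invariant => H; rewrite -map_mxM map_submx.
split.
- move=> HK [eta [Hs Hdvd Hr]].
  set etac := map_poly (ratr : rat -> R[i]) eta.
  have Heta0 : eta != 0 by rewrite -size_poly_gt0 (ltn_trans _ Hs).
  have Hetac0 : etac != 0 by rewrite map_poly_eq0.
  have Hs' : size etac != 1%N by rewrite size_map_poly gtn_eqF.
  have [l0 Hl0] := closed_rootP _ Hs'.
  have [w0 [Hw0 Hw0C Hw0e]] := Hr l0 Hl0.
  rewrite map_trmx in Hw0e.
  set Pq := horner_mx Bq eta.
  have HPc : map_mx (ratr : rat -> R[i]) Pq = horner_mx (map_mx (real_complex R) AR^T) etac.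
    by rewrite map_horner_mx cC.
  have Hdet : \det Pq == 0.
    rewrite -(fmorph_eq0 (ratr : {rmorphism rat -> R[i]})) -det_map_mx HPc.
    apply/det0P; exists w0 => //; rewrite (eig_horner _ Hw0e) (rootP Hl0) scale0r //.
  have /det0P [v Hv0 HvP] := Hdet.
  have [z [k [Hk Hz]]] := clear_den v.
  have HzP : map_mx (fun x : int => x%:~R) z *m Pq = 0 by rewrite Hz -scalemxAl HvP scaler0.
  have Hz0 : z != 0.
    apply: contra Hv0 => /eqP Hz0; move: Hz; rewrite Hz0 map_mx0 => /esym/eqP.
    by rewrite scalemx_eq0 (negPf Hk).
  apply: (negP Hz0); apply/eqP; apply: HK.
  have HetaC : map_poly (real_complex R) (map_poly (ratr : rat -> R) eta) = etac.
    by rewrite -map_poly_comp; apply: eq_map_poly => q /=; rewrite fmorph_rat.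
  have HzRP : int_to_real_mx R z *m horner_mx AR^T (map_poly (ratr : rat -> R) eta) = 0.
    by rewrite -vR -cR -map_horner_mx -map_mxM HzP map_mx0.
  have HPstab (V : 'M[R]_n.+1) : mx_invariant AR V ->
      stablemx V (horner_mx AR^T (map_poly (ratr : rat -> R) eta)).
    by move=> HV; apply: horner_mx_stable.
  have Hker (V : 'M[R]_n.+1) (s : 'rV[R]_n.+1) : mx_invariant AR V -> s != 0 -> (s <= V)%MS ->
      s *m horner_mx AR^T (map_poly (ratr : rat -> R) eta) = 0 ->
      exists l (w : 'rV[R[i]]_n.+1), [/\ w != 0, (w <= map_mx (real_complex R) V)%MS,
         w *m map_mx (real_complex R) AR^T = l *: w &
         exists2 w' : 'rV[R[i]]_n.+1, w' != 0 /\ (w' <= map_mx (real_complex R) C)%MS &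
           w' *m map_mx (real_complex R) AR^T = l *: w'].
    move=> HV Hs0 HsV HsP.
    have Hsc : map_mx (real_complex R) s *m horner_mx (map_mx (real_complex R) AR^T) etac = 0.
      by rewrite -HetaC -map_horner_mx -map_mxM HsP map_mx0.
    have Hsc0 : map_mx (real_complex R) s != 0 by rewrite map_mx_eq0.
    have HsVc : (map_mx (real_complex R) s <= map_mx (real_complex R) V)%MS by rewrite map_submx.
    have [l [w [Hroot Hw Hwv Hwe]]] :=
      eig_exists (stabC _ HV) Hsc0 HsVc Hetac0 Hsc.
    have [w' [Hw' Hw'C Hw'e]] := Hr l Hroot; rewrite map_trmx in Hw'e.
    by exists l, w; split => //; exists w'.
  apply: (in_C_of_ker Hfull Hdir (HPstab _ HSi) (HPstab _ HCi) (HPstab _ HUi) HzRP).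
  + move=> s HsS HsP; apply/eqP; apply/negPn/negP => Hs0.
    have [l [w [Hw Hwv Hwe [w' [Hw' Hw'C] Hw'e]]]] := Hker _ _ HSi Hs0 HsS HsP.
    exact: (spec_sep HQ Hw Hwv Hwe Hw' Hw'C Hw'e H3).
  + move=> s HsS HsP; apply/eqP; apply/negPn/negP => Hs0.
    have [l [w [Hw Hwv Hwe [w' [Hw' Hw'C] Hw'e]]]] := Hker _ _ HUi Hs0 HsS HsP.
    exact: (spec_sep HQ Hw' Hw'C Hw'e Hw Hwv Hwe H4).
- move=> Hno z HzC; case: (eqVneq z 0) => // Hz0; exfalso; apply: Hno.
  set zq := map_mx (fun x : int => (x%:~R : rat)) z.
  have Hzq0 : zq != 0.
    move/rV0Pn: Hz0 => [i Hi]; apply/rV0Pn; exists i; by rewrite mxE intr_eq0.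
  have Hch : zq *m horner_mx Bq (char_poly Fq) = 0.
    by rewrite /Bq -horner_trmx Cayley_Hamilton trmx0 mulmx0.
  have Hch0 : char_poly Fq != 0 by apply: monic_neq0; apply: char_poly_monic.
  have [p [Hp Hpa Hmin]] := min_annih Hch0 Hch.
  exists p; split.
  + rewrite ltnNge; apply/negP => Hle.
    move: Hpa; rewrite (size1_polyC Hle) horner_mx_C mul_mx_scalar => /eqP.
    rewrite scalemx_eq0 (negPf Hzq0) orbF => /eqP Hc.
    by move: Hp; rewrite (size1_polyC Hle) Hc eqxx.
  + rewrite /char_poly_Q -/Fq; apply/modp_eq0P.
    set r := char_poly Fq %% p.
    case: (eqVneq r 0) => // Hr0; exfalso.
    have Hra : zq *m horner_mx Bq r = 0.
      have -> : r = char_poly Fq - char_poly Fq %/ p * p.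
        by rewrite {1}(divp_eq (char_poly Fq) p) addrC addKr.
      rewrite rmorphB rmorphM /= mulmxBr Hch sub0r.
      have -> : horner_mx Bq (char_poly Fq %/ p) * horner_mx Bq p =
                horner_mx Bq p * horner_mx Bq (char_poly Fq %/ p).
        exact: comm_horner_mx2.
      by rewrite [_ * _]/(_ *m _) mulmxA Hpa mul0mx oppr0.
    have := Hmin _ Hr0 Hra.
    by rewrite leqNgt ltn_modp Hp.
  + move=> l Hl.
    have Hstab : stablemx (map_mx (real_complex R) C) (map_mx (ratr : rat -> R[i]) Bq).
      by rewrite cC; apply: stabC.
    have HzV : (map_mx (ratr : rat -> R[i]) zq <= map_mx (real_complex R) C)%MS.
      by rewrite vC map_submx.
    have [w [Hw HwC Hwe]] := dir2 Hp Hpa Hmin Hstab HzV Hl.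
    exists w; split => //; by rewrite map_trmx -cC.
Qed.
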